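(* Let $h\colon R\to S$ be a flat morphism of commutative rings, $\mathfrak{a}\subseteq R$ an ideal, and $\kappa$ a cardinal such that infinitely many powers of $\mathfrak{a}$ have generating sets of cardinality at most $\kappa$. Let $M$ be an $R$-module such that the canonical morphism $\varepsilon_{S,M,\kappa}\colon S\otimes_R(M^\kappa)\to(S\otimes_RM)^\kappa$ is injective. Then the canonical monomorphism $\rho^h_\mathfrak{a}(M)\colon S\otimes_R\Gamma_\mathfrak{a}(M)\to\Gamma_{\mathfrak{a}S}(S\otimes_RM)$ is an isomorphism.
   Context: $\Gamma_\mathfrak{a}(M)=\{x\in M\mid \exists n\in\mathbb{N}:\mathfrak{a}^n\subseteq(0:_Rx)\}$; $\mathfrak{a}S$ denotes the ideal of $S$ generated by $h(\mathfrak{a})$. $\varepsilon_{S,M,\kappa}$ sends $s\otimes(m_i)_i$ to $(s\otimes m_i)_i$. Since $h$ is flat, the map $S\otimes_R\Gamma_\mathfrak{a}(M)\to S\otimes_RM$ is injective and its image lies in $\Gamma_{\mathfrak{a}S}(S\otimes_RM)$; $\rho^h_\mathfrak{a}(M)$ is the resulting injective $S$-linear map $s\otimes m\mapsto s\otimes m$. *)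

(* Defs.v *)
(* (algebra), with classical axioms to build the product
   module M^K over an arbitrary index type K. *)
From HB Require Import structures.
From mathcomp Require Import all_boot all_algebra.
From Stdlib Require Import ClassicalEpsilon FunctionalExtensionality.

Set Implicit Arguments.
Unset Strict Implicit.
Unset Printing Implicit Defensive.

Import GRing.Theory.
Local Open Scope ring_scope.

(* The product module  M^K = prod_{i in K} M  (K any type: a cardinal) *)

Definition cl_eq (T : Type) (x y : T) : bool :=
  if excluded_middle_informative (x = y) then true else false.

Lemma cl_eqP (T : Type) : Equality.axiom (@cl_eq T).
Proof.
move=> x y; rewrite /cl_eq; case: excluded_middle_informative => H.
  by constructor. by constructor.
Qed.

Definition cl_find (T : Type) (P : pred T) (n : nat) : option T :=
  match excluded_middle_informative (exists x, P x) with
  | left H => Some (proj1_sig (constructive_indefinite_description _ H))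
  | right _ => None
  end.

Lemma cl_find_correct (T : Type) (P : pred T) n x : cl_find P n = Some x -> P x.
Proof.
rewrite /cl_find; case: excluded_middle_informative => // H [<-].
exact: proj2_sig (constructive_indefinite_description _ H).
Qed.

Lemma cl_find_complete (T : Type) (P : pred T) :
  (exists x, P x) -> exists n, cl_find P n.
Proof.
move=> H; exists 0%N; rewrite /cl_find; case: excluded_middle_informative => //.
Qed.

Lemma cl_find_ext (T : Type) (P Q : pred T) : P =1 Q -> cl_find P =1 cl_find Q.
Proof.
move=> E; have -> : P = Q by apply: functional_extensionality.
by [].
Qed.

Section ProdMod.
Variables (R : pzRingType) (K : Type) (M : lmodType R).

Definition prodmod : Type := K -> M.

HB.instance Definition _ := hasDecEq.Build prodmod (@cl_eqP prodmod).
HB.instance Definition _ := hasChoice.Build prodmod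
  (@cl_find_correct prodmod) (@cl_find_complete prodmod) (@cl_find_ext prodmod).

Definition pm_zero : prodmod := fun _ => 0.
Definition pm_opp (f : prodmod) : prodmod := fun i => - f i.
Definition pm_add (f g : prodmod) : prodmod := fun i => f i + g i.
Definition pm_scale (a : R) (f : prodmod) : prodmod := fun i => a *: f i.

Lemma pm_addA : associative pm_add.
Proof. by move=> f g k; apply: functional_extensionality => i; rewrite /pm_add addrA. Qed.
Lemma pm_addC : commutative pm_add.
Proof. by move=> f g; apply: functional_extensionality => i; rewrite /pm_add addrC. Qed.
Lemma pm_add0 : left_id pm_zero pm_add.
Proof. by move=> f; apply: functional_extensionality => i; rewrite /pm_add /pm_zero add0r. Qed.
Lemma pm_addN : left_inverse pm_zero pm_opp pm_add.
Proof. by move=> f; apply: functional_extensionality => i; rewrite /pm_add /pm_opp addNr. Qed.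

HB.instance Definition _ :=
  GRing.isZmodule.Build prodmod pm_addA pm_addC pm_add0 pm_addN.

Lemma pm_scaleA a b (f : prodmod) : pm_scale a (pm_scale b f) = pm_scale (a * b) f.
Proof. by apply: functional_extensionality => i; rewrite /pm_scale scalerA. Qed.
Lemma pm_scale1 : left_id 1 pm_scale.
Proof. by move=> f; apply: functional_extensionality => i; rewrite /pm_scale scale1r. Qed.
Lemma pm_scaleDr : right_distributive pm_scale (@GRing.add prodmod).
Proof. by move=> a f g; apply: functional_extensionality => i; rewrite /pm_scale scalerDr. Qed.
Lemma pm_scaleDl (f : prodmod) : {morph pm_scale^~ f : a b / a + b}.
Proof. by move=> a b; apply: functional_extensionality => i; rewrite /pm_scale scalerDl. Qed.

HB.instance Definition _ :=
  GRing.Zmodule_isLmodule.Build R prodmod pm_scaleA pm_scale1 pm_scaleDr pm_scaleDl.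

Lemma prodmod_addE (f g : prodmod) i : (f + g) i = f i + g i. Proof. by []. Qed.
Lemma prodmod_scaleE a (f : prodmod) i : (a *: f) i = a *: f i. Proof. by []. Qed.

End ProdMod.

Definition is_ideal (R : comPzRingType) (I : R -> Prop) : Prop :=
  [/\ I 0, (forall x y, I x -> I y -> I (x + y)) & (forall r x, I x -> I (r * x))].

Definition ideal_span (R : comPzRingType) (X : R -> Prop) : R -> Prop :=
  fun r => forall I : R -> Prop, is_ideal I -> (forall x, X x -> I x) -> I r.

Fixpoint ideal_pow (R : comPzRingType) (a : R -> Prop) (n : nat) : R -> Prop :=
  match n with
  | 0%N => fun _ => True
  | n'.+1 => ideal_span (fun r => exists x y, ideal_pow a n' x /\ a y /\ r = x * y)
  end.

Definition ideal_ext (R S : comPzRingType) (h : {rmorphism R -> S}) (a : R -> Prop)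
  : S -> Prop := ideal_span (fun s => exists r, a r /\ s = h r).

Definition gen_card_le (R : comPzRingType) (I : R -> Prop) (K : Type) : Prop :=
  exists X : R -> Prop,
    (exists f : {x : R | X x} -> K, injective f) /\
    (forall r, I r <-> ideal_span X r).

Definition in_Gamma (R : comPzRingType) (a : R -> Prop) (M : lmodType R) (x : M)
  : Prop := exists n : nat, forall r, ideal_pow a n r -> r *: x = 0.

(* t : S -> M -> T is the map (s, m) |-> s (x) m.                        *)

Definition base_change_bilin (R S : comPzRingType) (h : {rmorphism R -> S})
  (M : lmodType R) (P : lmodType S) (f : S -> M -> P) : Prop :=
  [/\ (forall s s' m, f (s + s') m = f s m + f s' m),
      (forall s m m', f s (m + m') = f s m + f s m'),
      (forall r s m, f (h r * s) m = f s (r *: m)) &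
      (forall s s' m, f (s * s') m = s *: f s' m)].

Definition is_base_change (R S : comPzRingType) (h : {rmorphism R -> S})
  (M : lmodType R) (T : lmodType S) (t : S -> M -> T) : Prop :=
  base_change_bilin h t /\
  forall (P : lmodType S) (f : S -> M -> P), base_change_bilin h f ->
    exists g : {linear T -> P},
      (forall s m, g (t s m) = f s m) /\
      (forall g' : {linear T -> P}, (forall s m, g' (t s m) = f s m) ->
         forall x, g' x = g x).

Definition flat_morphism (R S : comPzRingType) (h : {rmorphism R -> S}) : Prop :=
  forall (N N' : lmodType R) (u : {linear N -> N'}), injective u ->
  forall (T : lmodType S) (t : S -> N -> T) (T' : lmodType S) (t' : S -> N' -> T'),
    is_base_change h t -> is_base_change h t' ->
    forall g : {linear T -> T'}, (forall s n, g (t s n) = t' s (u n)) -> injective g.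

(* Main.v *)
Require Import Defs.
From HB Require Import structures.
From mathcomp Require Import all_boot all_algebra.
From Stdlib Require Import ClassicalEpsilon FunctionalExtensionality PropExtensionality ProofIrrelevance.
Set Implicit Arguments. Unset Strict Implicit. Unset Printing Implicit Defensive.
Import GRing.Theory.
Local Open Scope ring_scope.

Section Pack.
Variables (R : pzRingType) (U V : lmodType R) (f : U -> V) (fL : linear f).
Definition mkL : {linear U -> V} := HB.pack f (GRing.isLinear.Build R U V *:%R f fL).
Lemma mkLE x : mkL x = f x. Proof. by []. Qed.
End Pack.

Record premod (R : pzRingType) := Premod {
  pX : Type; pE : pX -> pX -> Prop;
  pz : pX; pad : pX -> pX -> pX; pop : pX -> pX; psc : R -> pX -> pX;
  pErefl : forall x, pE x x;
  pEsym : forall x y, pE x y -> pE y x;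
  pEtrans : forall x y w, pE x y -> pE y w -> pE x w;
  padE : forall x x' y y', pE x x' -> pE y y' -> pE (pad x y) (pad x' y');
  popE : forall x x', pE x x' -> pE (pop x) (pop x');
  pscE : forall a x x', pE x x' -> pE (psc a x) (psc a x');
  paddA : forall x y w, pE (pad x (pad y w)) (pad (pad x y) w);
  paddC : forall x y, pE (pad x y) (pad y x);
  padd0 : forall x, pE (pad pz x) x;
  paddN : forall x, pE (pad (pop x) x) pz;
  pscA : forall a b x, pE (psc a (psc b x)) (psc (a * b) x);
  psc1 : forall x, pE (psc 1 x) x;
  pscDr : forall a x y, pE (psc a (pad x y)) (pad (psc a x) (psc a y));
  pscDl : forall a b x, pE (psc (a + b) x) (pad (psc a x) (psc b x))
}.

Section Quot.
Variables (R : pzRingType) (p : premod R).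
Local Notation X := (@pX _ p).
Local Notation E := (@pE _ p).
Definition qT := {C : X -> Prop | exists x, C = E x}.
Definition cls (x : X) : qT := exist _ (E x) (ex_intro _ x erefl).
Definition rep (c : qT) : X := proj1_sig (constructive_indefinite_description _ (proj2_sig c)).
Lemma repK c : cls (rep c) = c.
Proof.
rewrite /rep; case: c => C HC /=.
case: (constructive_indefinite_description _ HC) => x /= Hx.
rewrite /cls; subst C; congr exist; exact: proof_irrelevance.
Qed.
Lemma clsP x y : cls x = cls y <-> E x y.
Proof.
split.
  move=> H; have: E x = E y by move: H; rewrite /cls => -[].
  by move=> ->; apply: pErefl.
move=> H; rewrite /cls.
have e : E x = E y.
  apply: functional_extensionality => w; apply: propositional_extensionality; split.
    by move=> H'; apply: pEtrans (pEsym H) H'.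
  by move=> H'; apply: pEtrans H H'.
move: (ex_intro _ x erefl : exists w, E x = E w); rewrite e => pf.
congr exist; exact: proof_irrelevance.
Qed.
Lemma cls_rep x : E (rep (cls x)) x.
Proof. by apply/clsP; rewrite repK. Qed.
Lemma qT_ex (c : qT) : exists x, c = cls x.
Proof. by exists (rep c); rewrite repK. Qed.

Definition qz : qT := cls (@pz _ p).
Definition qadd (c d : qT) : qT := cls (pad (rep c) (rep d)).
Definition qopp (c : qT) : qT := cls (pop (rep c)).
Definition qsc (a : R) (c : qT) : qT := cls (psc a (rep c)).
Lemma qaddE x y : qadd (cls x) (cls y) = cls (pad x y).
Proof. by apply/clsP; apply: padE; apply: cls_rep. Qed.
Lemma qoppE x : qopp (cls x) = cls (pop x).
Proof. by apply/clsP; apply: popE; apply: cls_rep. Qed.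
Lemma qscE a x : qsc a (cls x) = cls (psc a x).
Proof. by apply/clsP; apply: pscE; apply: cls_rep. Qed.

HB.instance Definition _ := hasDecEq.Build qT (@cl_eqP qT).
HB.instance Definition _ := hasChoice.Build qT
  (@cl_find_correct qT) (@cl_find_complete qT) (@cl_find_ext qT).

Lemma qaddA : associative qadd.
Proof.
move=> c d e; case: (qT_ex c) (qT_ex d) (qT_ex e) => x -> [y ->] [w ->].
by rewrite !qaddE; apply/clsP; apply: paddA.
Qed.
Lemma qaddC : commutative qadd.
Proof. move=> c d; case: (qT_ex c) (qT_ex d) => x -> [y ->].
by rewrite !qaddE; apply/clsP; apply: paddC. Qed.
Lemma qadd0 : left_id qz qadd.
Proof. move=> c; case: (qT_ex c) => x ->.
by rewrite /qz qaddE; apply/clsP; apply: padd0. Qed.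
Lemma qaddN : left_inverse qz qopp qadd.
Proof. move=> c; case: (qT_ex c) => x ->.
by rewrite qoppE qaddE; apply/clsP; apply: paddN. Qed.
HB.instance Definition _ := GRing.isZmodule.Build qT qaddA qaddC qadd0 qaddN.
Lemma qscA a b c : qsc a (qsc b c) = qsc (a * b) c.
Proof. case: (qT_ex c) => x ->. by rewrite !qscE; apply/clsP; apply: pscA. Qed.
Lemma qsc1 : left_id 1 qsc.
Proof. move=> c; case: (qT_ex c) => x ->. by rewrite !qscE; apply/clsP; apply: psc1. Qed.
Lemma qscDr : right_distributive qsc (@GRing.add qT).
Proof. move=> a c d; case: (qT_ex c) (qT_ex d) => x -> [y ->].
change (qsc a (qadd (cls x) (cls y)) = qadd (qsc a (cls x)) (qsc a (cls y))).
by rewrite [qadd (cls x) (cls y)]qaddE !qscE qaddE; apply/clsP; apply: pscDr. Qed.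
Lemma qscDl (c : qT) : {morph qsc^~ c : a b / a + b}.
Proof. move=> a b; case: (qT_ex c) => x ->.
change (qsc (a + b) (cls x) = qadd (qsc a (cls x)) (qsc b (cls x))).
by rewrite !qscE qaddE; apply/clsP; apply: pscDl. Qed.
HB.instance Definition _ := GRing.Zmodule_isLmodule.Build R qT qscA qsc1 qscDr qscDl.

Lemma cls_add x y : cls x + cls y = cls (pad x y). Proof. exact: qaddE. Qed.
Lemma cls_scale a x : a *: cls x = cls (psc a x). Proof. exact: qscE. Qed.
Lemma cls_zero : (0 : qT) = cls (@pz _ p). Proof. by []. Qed.
End Quot.

Section SubQuot.
Variables (R : pzRingType) (Q : lmodType R) (P : Q -> Prop).
Hypotheses (P0 : P 0) (PD : forall x y, P x -> P y -> P (x + y))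
  (PZ : forall a x, P x -> P (a *: x)).
Let E (x y : Q) := P (x - y).
Let Erefl x : E x x. Proof. by rewrite /E subrr. Qed.
Let eqE x y : x = y -> E x y. Proof. by move=> ->. Qed.
Let Esym x y : E x y -> E y x.
Proof. by move=> H; rewrite /E -opprB -scaleN1r; apply: PZ. Qed.
Let Etrans x y w : E x y -> E y w -> E x w.
Proof. by move=> H1 H2; rewrite /E -[x](subrK y) -addrA; apply: PD. Qed.
Let adE x x' y y' : E x x' -> E y y' -> E (x + y) (x' + y').
Proof. by move=> H1 H2; rewrite /E opprD addrACA; apply: PD. Qed.
Let opE x x' : E x x' -> E (- x) (- x').
Proof. move=> H; rewrite /E (_ : - x - - x' = (-1) *: (x - x')); first exact: PZ.
by rewrite scaleN1r opprB opprK addrC. Qed.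
Let scE a x x' : E x x' -> E (a *: x) (a *: x').
Proof. by move=> H; rewrite /E -scalerBr; apply: PZ. Qed.

Definition subq_premod : premod R :=
  @Premod R Q E 0 +%R -%R *:%R Erefl Esym Etrans adE opE scE
   (fun x y w => eqE (addrA x y w)) (fun x y => eqE (addrC x y))
   (fun x => eqE (add0r x)) (fun x => eqE (addNr x))
   (fun a b x => eqE (scalerA a b x)) (fun x => eqE (scale1r x))
   (fun a x y => eqE (scalerDr a x y)) (fun a b x => eqE (scalerDl x a b)).

Definition subQ := qT subq_premod.
Definition qmap (x : Q) : subQ := cls (p:=subq_premod) x.
Lemma qmap_lin : linear qmap.
Proof. by move=> a x y; rewrite /qmap cls_scale cls_add. Qed.
Lemma qmap0 x : qmap x = 0 <-> P x.
Proof.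
rewrite /qmap cls_zero; split.
  by move/clsP; rewrite /= /E subr0.
by move=> H; apply/clsP; rewrite /= /E subr0.
Qed.
Lemma qmap_eq x y : qmap x = qmap y <-> P (x - y).
Proof. by split; [move/clsP|move=> H; apply/clsP]. Qed.
Lemma qmap_surj (c : subQ) : exists x, c = qmap x.
Proof. exact: (@qT_ex _ subq_premod c). Qed.
End SubQuot.

Section Tensor.
Variables (R S : comPzRingType) (h : {rmorphism R -> S}) (N : lmodType R).
Definition ev (P : lmodType S) (f : S -> N -> P) (l : seq (S * N)) : P :=
  \sum_(q <- l) f q.1 q.2.
Let X := seq (S * N).
Let E (l l' : X) := forall (P : lmodType S) (f : S -> N -> P),
   base_change_bilin h f -> ev f l = ev f l'.
Let tz : X := [::].
Let tad (l l' : X) : X := l ++ l'.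
Let top (l : X) : X := map (fun q => (- q.1, q.2)) l.
Let tsc (a : S) (l : X) : X := map (fun q => (a * q.1, q.2)) l.

Lemma bil0 (P : lmodType S) (f : S -> N -> P) : base_change_bilin h f -> forall m, f 0 m = 0.
Proof. case=> H1 _ _ _ m; have := H1 0 0 m; rewrite addr0.
by move/(congr1 (fun z => z - f 0 m)); rewrite subrr addrK. Qed.
Lemma bilN (P : lmodType S) (f : S -> N -> P) : base_change_bilin h f -> forall s m, f (- s) m = - f s m.
Proof. move=> B s m; have := (let: And4 H1 _ _ _ := B in H1) (- s) s m; rewrite addNr bil0 //.
by move/(congr1 (fun z => z - f s m)); rewrite sub0r addrK. Qed.
Lemma ev_cat (P : lmodType S) (f : S -> N -> P) l l' : ev f (l ++ l') = ev f l + ev f l'.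
Proof. by rewrite /ev big_cat. Qed.
Lemma ev_nil (P : lmodType S) (f : S -> N -> P) : ev f [::] = 0.
Proof. by rewrite /ev big_nil. Qed.
Lemma ev_cons (P : lmodType S) (f : S -> N -> P) q l : ev f (q :: l) = f q.1 q.2 + ev f l.
Proof. by rewrite /ev big_cons. Qed.
Lemma ev_op (P : lmodType S) (f : S -> N -> P) l : base_change_bilin h f -> ev f (top l) = - ev f l.
Proof. move=> B; elim: l => [|q l IH]; first by rewrite /top /= !ev_nil oppr0.
by rewrite /top /= !ev_cons -/(top l) IH bilN // opprD. Qed.
Lemma ev_sc (P : lmodType S) (f : S -> N -> P) a l : base_change_bilin h f -> ev f (tsc a l) = a *: ev f l.
Proof. move=> B; elim: l => [|q l IH]; first by rewrite /tsc /= !ev_nil scaler0.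
by rewrite /tsc /= !ev_cons -/(tsc a l) IH scalerDr; case: B => _ _ _ ->. Qed.

Let Erefl x : E x x. Proof. by []. Qed.
Let Esym x y : E x y -> E y x. Proof. by move=> H P f B; rewrite H. Qed.
Let Etrans x y w : E x y -> E y w -> E x w. Proof. by move=> H1 H2 P f B; rewrite H1 ?H2. Qed.
Let adE x x' y y' : E x x' -> E y y' -> E (tad x y) (tad x' y').
Proof. by move=> H1 H2 P f B; rewrite /tad !ev_cat H1 ?H2. Qed.
Let opE x x' : E x x' -> E (top x) (top x').
Proof. by move=> H P f B; rewrite !ev_op // H. Qed.
Let scE a x x' : E x x' -> E (tsc a x) (tsc a x').
Proof. by move=> H P f B; rewrite !ev_sc // H. Qed.
Let tA x y w : E (tad x (tad y w)) (tad (tad x y) w).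
Proof. by move=> P f B; rewrite /tad catA. Qed.
Let tC x y : E (tad x y) (tad y x).
Proof. by move=> P f B; rewrite /tad !ev_cat addrC. Qed.
Let t0 x : E (tad tz x) x. Proof. by []. Qed.
Let tN x : E (tad (top x) x) tz.
Proof. by move=> P f B; rewrite /tad ev_cat ev_op // addNr ev_nil. Qed.
Let tsA a b x : E (tsc a (tsc b x)) (tsc (a * b) x).
Proof. by move=> P f B; rewrite !ev_sc // scalerA. Qed.
Let ts1 x : E (tsc 1 x) x.
Proof. by move=> P f B; rewrite ev_sc // scale1r. Qed.
Let tsDr a x y : E (tsc a (tad x y)) (tad (tsc a x) (tsc a y)).
Proof. by move=> P f B; rewrite /tad ev_sc // !ev_cat !ev_sc // scalerDr. Qed.
Let tsDl a b x : E (tsc (a + b) x) (tad (tsc a x) (tsc b x)).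
Proof. by move=> P f B; rewrite /tad ev_sc // !ev_cat !ev_sc // scalerDl. Qed.

Definition tens_premod : premod S :=
  @Premod S X E tz tad top tsc Erefl Esym Etrans adE opE scE tA tC t0 tN tsA ts1 tsDr tsDl.
Definition tensT := qT tens_premod.
Definition tens (s : S) (n : N) : tensT := cls (p:=tens_premod) [:: (s, n)].

Lemma tens_bc : is_base_change h tens.
Proof.
have clsE : forall (P : lmodType S) (f : S -> N -> P) x, base_change_bilin h f ->
    ev f (rep (cls (p:=tens_premod) x)) = ev f x.
  by move=> P f x B; apply: (@cls_rep _ tens_premod x).
have tensE : forall l, cls (p:=tens_premod) l = \sum_(q <- l) tens q.1 q.2.
  elim=> [|q l IH]; first by rewrite big_nil cls_zero.
  rewrite big_cons -IH /tens cls_add; case: q => s n //.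
split.
  split.
  - move=> s s' m; rewrite /tens cls_add; apply/clsP => P f B.
    by rewrite /tad ev_cat !ev_cons !ev_nil !addr0; case: B => ->.
  - move=> s m m'; rewrite /tens cls_add; apply/clsP => P f B.
    by rewrite /tad ev_cat !ev_cons !ev_nil !addr0; case: B => _ ->.
  - move=> r s m; rewrite /tens; apply/clsP => P f B.
    by rewrite !ev_cons !ev_nil !addr0; case: B => _ _ ->.
  - move=> s s' m; rewrite /tens cls_scale; apply/clsP => P f B.
    by rewrite /tsc /= !ev_cons !ev_nil !addr0.
move=> P f B.
pose g (c : tensT) := ev f (rep c).
have gE : forall x, g (cls x) = ev f x by move=> x; rewrite /g clsE.
have gL : linear g.
  move=> a c d; case: (qT_ex c) (qT_ex d) => x -> [y ->].
  by rewrite cls_scale cls_add !gE ev_cat ev_sc.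
exists (mkL gL); split.
  by move=> s m; rewrite mkLE /tens gE ev_cons ev_nil addr0.
move=> g' Hg' c; case: (qT_ex c) => x ->; rewrite mkLE gE tensE linear_sum.
rewrite /ev; apply: eq_bigr => q _; exact: Hg'.
Qed.
End Tensor.

Section Ideals.
Variable (R : comPzRingType).
Lemma span_ideal (X : R -> Prop) : is_ideal (ideal_span X).
Proof.
split.
- by move=> I [].
- by move=> x y Hx Hy I HI HX; case: (HI) => _ HD _; apply: HD; [apply: Hx|apply: Hy].
- by move=> r x Hx I HI HX; case: (HI) => _ _ HM; apply: HM; apply: Hx.
Qed.
Lemma span_sub (X : R -> Prop) x : X x -> ideal_span X x.
Proof. by move=> Hx I _ HX; apply: HX. Qed.
Lemma span_min (X I : R -> Prop) : is_ideal I -> (forall x, X x -> I x) ->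
  forall r, ideal_span X r -> I r.
Proof. by move=> HI HX r Hr; apply: Hr. Qed.
Lemma pow_ideal (a : R -> Prop) n : is_ideal (ideal_pow a n).
Proof. by case: n => [|n] /=; [split|apply: span_ideal]. Qed.
Lemma pow_succ (a : R -> Prop) n r : ideal_pow a n.+1 r -> ideal_pow a n r.
Proof.
move=> /=; apply: span_min; first exact: pow_ideal.
move=> _ [x [y [Hx [Hy ->]]]]; rewrite mulrC.
by case: (pow_ideal a n) => _ _ HM; apply: HM.
Qed.
Lemma pow_mono (a : R -> Prop) n m r : (n <= m)%N -> ideal_pow a m r -> ideal_pow a n r.
Proof.
move=> /subnK <-; elim: (m - n)%N => [|k IH] //= H.
by apply: IH; apply: pow_succ.
Qed.
Lemma ann_ideal (V : lmodType R) (v : V) : is_ideal (fun r : R => r *: v = 0).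
Proof.
split; first by rewrite scale0r.
  by move=> x y Hx Hy; rewrite scalerDl Hx Hy addr0.
by move=> r x Hx; rewrite -scalerA Hx scaler0.
Qed.
End Ideals.

Section Ext.
Variables (R S : comPzRingType) (h : {rmorphism R -> S}) (a : R -> Prop).
Lemma ext_pow n r : ideal_pow a n r -> ideal_pow (ideal_ext h a) n (h r).
Proof.
elim: n r => [|n IH] r //=.
pose I := fun r => ideal_span (fun r0 : S => exists x y : S,
   ideal_pow (ideal_ext h a) n x /\ ideal_ext h a y /\ r0 = x * y) (h r).
have HI : is_ideal I.
  case: (span_ideal (fun r0 : S => exists x y : S,
   ideal_pow (ideal_ext h a) n x /\ ideal_ext h a y /\ r0 = x * y)) => H0 HD HM.
  split; rewrite /I ?rmorph0 //.
    by move=> x y Hx Hy; rewrite rmorphD; apply: HD.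
  by move=> r0 x Hx; rewrite rmorphM; apply: HM.
apply: (span_min HI) => _ [x [y [Hx [Hy ->]]]].
rewrite /I rmorphM; apply: span_sub; exists (h x), (h y); split; first exact: IH.
by split => //; apply: span_sub; exists y.
Qed.

Lemma ext_pow_sub n s : ideal_pow (ideal_ext h a) n s ->
  ideal_span (fun t => exists r, ideal_pow a n r /\ t = h r) s.
Proof.
elim: n s => [|n IH] s /=.
  move=> _; rewrite -[s]mulr1; case: (span_ideal (fun t : S => exists r : R, ideal_pow a 0 r /\ t = h r)) => _ _ HM.
  by apply: HM; apply: span_sub; exists 1; rewrite rmorph1.
pose J := ideal_span (fun t : S => exists r, ideal_pow a n.+1 r /\ t = h r).
have HJ : is_ideal J by apply: span_ideal.
case: (HJ) => J0 JD JM.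
apply: (span_min HJ) => _ [x [y [Hx [Hy ->]]]].
have := IH x Hx; move: Hy; move: y x {Hx}.
suff: forall x, ideal_span (fun t : S => exists r : R, ideal_pow a n r /\ t = h r) x ->
   forall y, ideal_ext h a y -> J (x * y).
  by move=> H y x Hy Hx; apply: H.
apply: span_min.
  split.
  - by move=> y0 _; rewrite mul0r.
  - by move=> x1 x2 H1 H2 y0 Hy0; rewrite mulrDl; apply: JD; [apply: H1|apply: H2].
  - by move=> r x0 H y0 Hy0; rewrite -mulrA; apply: JM; apply: H.
move=> _ [b [Hb ->]].
apply: (span_min (I := fun y0 => J (h b * y0))).
  split; first by rewrite mulr0.
    by move=> x1 x2 H1 H2; rewrite mulrDr; apply: JD.
  by move=> r x0 H; rewrite mulrCA; apply: JM.
move=> _ [c [Hc ->]]; rewrite -rmorphM; apply: span_sub; exists (b * c); split => //.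
by apply: span_sub; exists b, c.
Qed.

Lemma kill_ext (T : lmodType S) (z : T) n :
  (forall b, ideal_pow a n b -> h b *: z = 0) ->
  forall s, ideal_pow (ideal_ext h a) n s -> s *: z = 0.
Proof.
move=> Hb s /ext_pow_sub; apply: (span_min (ann_ideal z)).
by move=> _ [r [Hr ->]]; apply: Hb.
Qed.
End Ext.

Section Lin.
Lemma lin_comp (R : pzRingType) (U V W : lmodType R) (f : {linear U -> V}) (g : {linear V -> W}) :
  linear (g \o f).
Proof. by move=> c x y /=; rewrite !linearP. Qed.
Lemma lin0 (R : pzRingType) (U V : lmodType R) : linear (fun _ : U => (0 : V)).
Proof. by move=> c x y; rewrite scaler0 addr0. Qed.
End Lin.

Section BC.
Variables (R S : comPzRingType) (h : {rmorphism R -> S}).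
Lemma bil_m0 (N : lmodType R) (P : lmodType S) (f : S -> N -> P) :
  base_change_bilin h f -> forall s, f s 0 = 0.
Proof. case=> _ H1 _ _ s; have := H1 s 0 0; rewrite addr0.
by move/(congr1 (fun z => z - f s 0)); rewrite subrr addrK. Qed.
Lemma bil_mN (N : lmodType R) (P : lmodType S) (f : S -> N -> P) :
  base_change_bilin h f -> forall s m, f s (- m) = - f s m.
Proof. move=> B s m; have := (let: And4 _ H1 _ _ := B in H1) s (- m) m; rewrite addNr bil_m0 //.
by move/(congr1 (fun z => z - f s m)); rewrite sub0r addrK. Qed.
Lemma bil_mB (N : lmodType R) (P : lmodType S) (f : S -> N -> P) :
  base_change_bilin h f -> forall s m m', f s (m - m') = f s m - f s m'.
Proof. by move=> B s m m'; rewrite (let: And4 _ H1 _ _ := B in H1) bil_mN. Qed.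
Lemma bil_mZ (N : lmodType R) (P : lmodType S) (f : S -> N -> P) :
  base_change_bilin h f -> forall s r m, f s (r *: m) = h r *: f s m.
Proof. by case=> _ _ H3 H4 s r m; rewrite -H3 H4. Qed.

Lemma bil_lin (N N' : lmodType R) (P : lmodType S) (f : S -> N -> P) (u : {linear N' -> N}) :
  base_change_bilin h f -> base_change_bilin h (fun s n => f s (u n)).
Proof.
case=> H1 H2 H3 H4; split => //.
- by move=> s m m'; rewrite linearD H2.
- by move=> r s m; rewrite H3 linearZ.
Qed.
Lemma lin_bil (N : lmodType R) (P P' : lmodType S) (f : S -> N -> P) (g : {linear P -> P'}) :
  base_change_bilin h f -> base_change_bilin h (fun s n => g (f s n)).
Proof.
case=> H1 H2 H3 H4; split.
- by move=> s s' m; rewrite H1 linearD.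
- by move=> s m m'; rewrite H2 linearD.
- by move=> r s m; rewrite H3.
- by move=> s s' m; rewrite H4 linearZ.
Qed.

Lemma bc_unique (N : lmodType R) (T : lmodType S) (t : S -> N -> T) :
  is_base_change h t -> forall (P : lmodType S) (g1 g2 : {linear T -> P}),
  (forall s m, g1 (t s m) = g2 (t s m)) -> forall x, g1 x = g2 x.
Proof.
case=> B U P g1 g2 E x.
have [g [_ Hg]] := U P (fun s m => g2 (t s m)) (lin_bil g2 B).
by rewrite (Hg g1) ?(Hg g2).
Qed.
End BC.
Import GRing.Theory.

Theorem proposition8p5
  (R S : comPzRingType) (h : {rmorphism R -> S}) (h_flat : flat_morphism h)
  (a : R -> Prop) (a_ideal : is_ideal a)
  (K : Type) (* the cardinal kappa *)
  (hgen : forall N : nat, exists n : nat, (N <= n)%N /\ gen_card_le (ideal_pow a n) K)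
  (M : lmodType R)
  (* T1 = S (x)_R M *)
  (T1 : lmodType S) (t1 : S -> M -> T1) (bc1 : is_base_change h t1)
  (* T2 = S (x)_R (M^kappa) *)
  (T2 : lmodType S) (t2 : S -> prodmod K M -> T2) (bc2 : is_base_change h t2)
  (* epsilon_{S,M,kappa} : T2 -> T1^kappa, s (x) (m_i)_i |-> (s (x) m_i)_i *)
  (eps : {linear T2 -> prodmod K T1})
  (eps_def : forall s (m : prodmod K M), eps (t2 s m) = ((fun i => t1 s (m i)) : prodmod K T1))
  (eps_inj : injective eps)
  (* G = Gamma_a(M), given with its inclusion j into M *)
  (G : lmodType R) (j : {linear G -> M}) (j_inj : injective j)
  (j_im : forall x : M, in_Gamma a x <-> exists y, j y = x)
  (* T3 = S (x)_R Gamma_a(M) *)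
  (T3 : lmodType S) (t3 : S -> G -> T3) (bc3 : is_base_change h t3)
  (* rho^h_a(M) : T3 -> T1, s (x) m |-> s (x) m *)
  (rho : {linear T3 -> T1}) (rho_def : forall s y, rho (t3 s y) = t1 s (j y)) :
  injective rho /\
  (forall z : T1, in_Gamma (ideal_ext h a) z <-> exists x, rho x = z).
Proof.
have B1 := bc1; case: B1 => Bl1 U1.
have t1Z := bil_mZ Bl1.
have t10 := bil_m0 Bl1.
have t1B := bil_mB Bl1.
split.
  exact: (@h_flat G M j j_inj T3 t3 T1 t1 bc3 bc1 rho rho_def).
move=> z; split; last first.
  move=> [x <-].
  pose P := in_Gamma (ideal_ext h a) (M:=T1).
  have P0 : P 0 by exists 0%N => r _; rewrite scaler0.
  have PD : forall x y, P x -> P y -> P (x + y).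
    move=> x1 x2 [n1 H1] [n2 H2]; exists (maxn n1 n2) => r Hr.
    rewrite scalerDr H1 ?H2 ?addr0 //; apply: (pow_mono _ Hr).
      exact: leq_maxr. exact: leq_maxl.
  have PZ : forall c x, P x -> P (c *: x).
    move=> c x1 [n1 H1]; exists n1 => r Hr; by rewrite scalerA mulrC -scalerA H1 // scaler0.
  pose q := mkL (qmap_lin P0 PD PZ).
  suff: q (rho x) = 0 by move/qmap0.
  have E0 : forall s y, (mkL (lin_comp rho q)) (t3 s y) = (mkL (@lin0 _ T3 _)) (t3 s y).
    move=> s y; rewrite !mkLE /= rho_def; apply/qmap0.
    have [n Hn] : in_Gamma a (j y) by apply/j_im; exists y.
    exists n; apply: kill_ext => b Hb.
    by rewrite -t1Z Hn // t10.
  by have := @bc_unique _ _ h _ _ _ bc3 _ _ _ E0 x; rewrite !mkLE.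
move=> [n Hz].
have [n' [Hnn' [X [[f0 f0inj] HX]]]] := hgen n.
pose c : K -> R := fun k =>
  match excluded_middle_informative (exists x : {x | X x}, f0 x = k) with
  | left H => proj1_sig (proj1_sig (constructive_indefinite_description _ H))
  | right _ => 0 end.
have cf : forall x, c (f0 x) = proj1_sig x.
  move=> x; rewrite /c; case: excluded_middle_informative => [H|H]; last first.
    by exfalso; apply: H; exists x.
  by case: (constructive_indefinite_description _ H) => x' /= /f0inj ->.
have ca : forall k, ideal_pow a n' (c k).
  move=> k; rewrite /c; case: excluded_middle_informative => [H|H].
    case: (constructive_indefinite_description _ H) => [[x' Hx']] /= _.
    by apply/HX; apply: span_sub.
  by case: (pow_ideal a n').
pose phi : M -> prodmod K M := fun m k => c k *: m.
have phiL : linear phi.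
  move=> r m m'; apply: functional_extensionality => k.
  by rewrite prodmod_addE prodmod_scaleE /phi scalerDr !scalerA mulrC.
pose Phi := mkL phiL.
have phi0 : phi 0 = 0 := linear0 Phi.
have phiD : forall x y, phi (x + y) = phi x + phi y := linearD Phi.
have phiB : forall x y, phi (x - y) = phi x - phi y := linearB Phi.
have phiZ : forall r x, phi (r *: x) = r *: phi x by move=> r x; rewrite -[phi _](mkLE phiL) linearZ.
have ker : forall m, phi m = 0 -> exists y, j y = m.
  move=> m Hm; apply/j_im; exists n' => r /HX; apply: (span_min (ann_ideal m)) => x Hx.
  by have := congr1 (fun F => F (f0 (exist _ x Hx))) Hm; rewrite /phi cf.
pose Pk := fun m => phi m = 0.
have Pk0 : Pk 0 by [].
have PkD : forall x y, Pk x -> Pk y -> Pk (x + y).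
  by move=> x y; rewrite /Pk phiD => -> ->; rewrite addr0.
have PkZ : forall r x, Pk x -> Pk (r *: x).
  by move=> r x; rewrite /Pk phiZ => ->; rewrite scaler0.
pose pi := mkL (qmap_lin Pk0 PkD PkZ).
have piE : forall x y, pi x = pi y <-> phi x = phi y.
  move=> x y; rewrite !mkLE; split.
    by move/qmap_eq; rewrite /Pk phiB => /eqP; rewrite subr_eq0 => /eqP.
  by move=> E; apply/qmap_eq; rewrite /Pk phiB E subrr.
pose rp := @rep _ (subq_premod Pk0 PkD PkZ).
have piRep : forall cc, pi (rp cc) = cc by move=> cc; rewrite mkLE /qmap /rp repK.
pose ubar := fun cc => phi (rp cc).
have ubar_pi : forall m, ubar (pi m) = phi m by move=> m; apply/piE; rewrite piRep.
have ubarL : linear ubar.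
  move=> r c1 c2; case: (qmap_surj c1) (qmap_surj c2) => x1 -> [x2 ->].
  have -> : r *: qmap Pk0 PkD PkZ x1 + qmap Pk0 PkD PkZ x2 = pi (r *: x1 + x2).
    by rewrite linearP.
  by rewrite -!(mkLE (qmap_lin Pk0 PkD PkZ)) !ubar_pi phiD phiZ.
pose Ubar := mkL ubarL.
have ubar_inj : injective Ubar.
  move=> c1 c2; case: (qmap_surj c1) (qmap_surj c2) => x1 -> [x2 ->].
  rewrite !mkLE -!(mkLE (qmap_lin Pk0 PkD PkZ)) !ubar_pi => E.
  by apply/piE.
have bcW := tens_bc h (qT (subq_premod Pk0 PkD PkZ)).
case: (bc2) => Bl2 _.
case: (bcW) => BlW UW.
case: (UW T2 (fun s cc => t2 s (Ubar cc)) (bil_lin Ubar Bl2)) => g [gdef _].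
have ginj := @h_flat _ _ Ubar ubar_inj _ _ _ _ bcW bc2 g gdef.
case: (U1 _ (fun s m => tens h s (pi m)) (bil_lin pi BlW)) => psi [psidef _].
pose D := fun w : T1 => ((fun k => h (c k) *: w) : prodmod K T1).
have DL : linear D.
  move=> r w w'; apply: functional_extensionality => k.
  by rewrite prodmod_addE prodmod_scaleE /D scalerDr !scalerA mulrC.
have ED : forall w, (mkL (lin_comp (mkL (lin_comp psi g)) eps)) w = (mkL DL) w.
  apply: (bc_unique bc1) => s m; rewrite !mkLE /= psidef gdef mkLE ubar_pi eps_def.
  apply: functional_extensionality => k; by rewrite /phi /D t1Z.
have Dz : D z = 0.
  apply: functional_extensionality => k; rewrite /D; apply: Hz.
  exact: (pow_mono Hnn' (ext_pow h (ca k))).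
have psiz : psi z = 0.
  apply: ginj; apply: eps_inj; rewrite !linear0.
  by have := ED z; rewrite !mkLE /= Dz.
pose Pr := fun w => exists x, rho x = w.
have Pr0 : Pr 0 by exists 0; rewrite linear0.
have PrD : forall x y, Pr x -> Pr y -> Pr (x + y).
  by move=> x y [x1 <-] [y1 <-]; exists (x1 + y1); rewrite linearD.
have PrZ : forall r x, Pr x -> Pr (r *: x).
  by move=> r x [x1 <-]; exists (r *: x1); rewrite linearZ.
pose qV := mkL (qmap_lin Pr0 PrD PrZ).
have key : forall s m m', pi m = pi m' -> qV (t1 s m) = qV (t1 s m').
  move=> s m m' /piE E; rewrite !mkLE; apply/qmap_eq.
  have [y Hy] : exists y, j y = m - m' by apply: ker; rewrite phiB E subrr.
  by exists (t3 s y); rewrite rho_def Hy t1B.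
pose F := fun s cc => qV (t1 s (rp cc)).
have FB : base_change_bilin h F.
  case: (Bl1) => H1 H2 H3 H4; split.
  - by move=> s s' cc; rewrite /F H1 linearD.
  - move=> s c1 c2; rewrite /F -linearD -H2; apply: key.
    by rewrite linearD !piRep.
  - move=> r s cc; rewrite /F H3; apply: key.
    by rewrite linearZ !piRep.
  - by move=> s s' cc; rewrite /F H4 linearZ.
case: (UW _ F FB) => lam [lamdef _].
have EV : forall w, (mkL (lin_comp psi lam)) w = qV w.
  apply: (bc_unique bc1) => s m; rewrite !mkLE /= psidef lamdef /F.
  by rewrite -!(mkLE (qmap_lin Pr0 PrD PrZ)); apply: key; rewrite piRep.
suff : qV z = 0 by rewrite mkLE => /qmap0.
by rewrite -EV mkLE /= psiz linear0.
Qed.
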